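(* Let $M\in\mathbb{R}^{p\times q}_+$ with $\operatorname{rank}(M)=\binom{k+1}{2}$ and $\operatorname{rank}_{\mathrm{psd}}(M)=k$. Fix a rank factorization $M=UV$ with $U\in\mathbb{R}^{p\times d}$, $V\in\mathbb{R}^{d\times q}$, $d=\binom{k+1}{2}$; let $u_i\in\mathbb{R}^d$ be the $i$-th row of $U$ (as a vector) and $v_j\in\mathbb{R}^d$ the $j$-th column of $V$. Let $P=\operatorname{cone}(u_1,\dots,u_p)$ and $Q=\{x\in\mathbb{R}^d: v_j^Tx\ge0\ \text{for all } j\}$. Then $\mathcal{SF}(M)$ is homeomorphic to $\Delta_k(P,Q)$.
   Context: $\mathcal{S}^k$ is the space of real symmetric $k\times k$ matrices, $\mathcal{S}^k_+$ the psd cone, $\langle A,B\rangle=\operatorname{trace}(AB)$. The psd rank of $M$ is the smallest $k$ admitting $A_1,\dots,A_p,B_1,\dots,B_q\in\mathcal{S}^k_+$ with $M_{ij}=\langle A_i,B_j\rangle$. With $k=\operatorname{rank}_{\mathrm{psd}}(M)$, the space of psd factorizations $\mathcal{SF}(M)\subseteq(\mathcal{S}^k)^{p+q}$ is the set of all tuples $(A_1,\dots,A_p,B_1,\dots,B_q)$ of matrices in $\mathcal{S}^k_+$ with $M_{ij}=\langle A_i,B_j\rangle$ for all $i,j$, with the subspace topology. $\Delta_k(P,Q)$ is the set of all linear maps $\pi:\mathcal{S}^k\to\mathbb{R}^{\binom{k+1}{2}}$ with $P\subseteq\pi(\mathcal{S}^k_+)\subseteq Q$, with the subspace topology of the space of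 linear maps. *)

(* Defs.v *)
(* real numbers are Stdlib's R.
   Matrices/vectors are represented as functions on nat, only the entries with
   indices below the relevant dimension matter. *)
From Stdlib Require Import Reals.
Open Scope R_scope.

Fixpoint rsum (n : nat) (f : nat -> R) : R :=
  match n with O => 0 | S m => rsum m f + f m end.

Definition mat := nat -> nat -> R.
Definition vec := nat -> R.

Definition sym (k : nat) (A : mat) : Prop :=
  forall a b, (a < k)%nat -> (b < k)%nat -> A a b = A b a.

Definition psd (k : nat) (A : mat) : Prop :=
  sym k A /\ forall x : vec, 0 <= rsum k (fun a => rsum k (fun b => x a * A a b * x b)).

Definition inner (k : nat) (A B : mat) : R :=
  rsum k (fun a => rsum k (fun b => A a b * B b a)).

Definition is_psd_fact (p q k : nat) (M : mat) (A B : nat -> mat) : Prop :=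
  (forall i, (i < p)%nat -> psd k (A i)) /\
  (forall j, (j < q)%nat -> psd k (B j)) /\
  (forall i j, (i < p)%nat -> (j < q)%nat -> M i j = inner k (A i) (B j)).

Definition has_psd_fact (p q k : nat) (M : mat) : Prop :=
  exists A B, is_psd_fact p q k M A B.

Definition psd_rank_eq (p q : nat) (M : mat) (k : nat) : Prop :=
  has_psd_fact p q k M /\ forall k', has_psd_fact p q k' M -> (k <= k')%nat.

Definition lin_indep (p r : nat) (f : nat -> vec) : Prop :=
  forall c : nat -> R,
    (forall i, (i < p)%nat -> rsum r (fun l => c l * f l i) = 0) ->
    forall l, (l < r)%nat -> c l = 0.

Definition mat_rank_eq (p q : nat) (M : mat) (r : nat) : Prop :=
  (exists c : nat -> nat, (forall l, (l < r)%nat -> (c l < q)%nat) /\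
     lin_indep p r (fun l i => M i (c l))) /\
  (forall c : nat -> nat, (forall l, (l < S r)%nat -> (c l < q)%nat) ->
     ~ lin_indep p (S r) (fun l i => M i (c l))).

Definition tri (k : nat) : nat := Nat.div (k * (k + 1)) 2.

(* The space SF(M) inside (S^k)^(p+q), with the (L1, hence Euclidean) distance *)
Definition SF (p q k : nat) (M : mat) (AB : (nat -> mat) * (nat -> mat)) : Prop :=
  is_psd_fact p q k M (fst AB) (snd AB).

Definition dSF (p q k : nat) (X Y : (nat -> mat) * (nat -> mat)) : R :=
  rsum p (fun i => rsum k (fun a => rsum k (fun b =>
     Rabs (fst X i a b - fst Y i a b)))) +
  rsum q (fun j => rsum k (fun a => rsum k (fun b =>
     Rabs (snd X j a b - snd Y j a b)))).

(* A linear map pi : S^k -> R^d is represented by d symmetric matrices C_0..C_(d-1),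
   pi(X)_l = <C_l, X>  (the standard identification Hom(S^k,R^d) = (S^k)^d). *)
Definition is_linmap (k d : nat) (C : nat -> mat) : Prop :=
  forall l, (l < d)%nat -> sym k (C l).

Definition apply_lin (k : nat) (C : nat -> mat) (X : mat) : vec :=
  fun l => inner k (C l) X.

Definition in_P (p d : nat) (U : mat) (x : vec) : Prop :=
  exists lam : nat -> R, (forall i, (i < p)%nat -> 0 <= lam i) /\
    forall l, (l < d)%nat -> x l = rsum p (fun i => lam i * U i l).

Definition in_Q (q d : nat) (V : mat) (x : vec) : Prop :=
  forall j, (j < q)%nat -> 0 <= rsum d (fun l => V l j * x l).

Definition DeltaPQ (p q k d : nat) (U V : mat) (C : nat -> mat) : Prop :=
  is_linmap k d C /\
  (forall x, in_P p d U x ->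
     exists X, psd k X /\ forall l, (l < d)%nat -> x l = apply_lin k C X l) /\
  (forall X, psd k X -> in_Q q d V (apply_lin k C X)).

Definition dLin (k d : nat) (C C' : nat -> mat) : R :=
  rsum d (fun l => rsum k (fun a => rsum k (fun b => Rabs (C l a b - C' l a b)))).

Definition cont_on {X Y : Type} (S : X -> Prop) (dX : X -> X -> R) (dY : Y -> Y -> R)
  (f : X -> Y) : Prop :=
  forall x, S x -> forall eps, 0 < eps -> exists delta, 0 < delta /\
    forall x', S x' -> dX x x' < delta -> dY (f x) (f x') < eps.

(* S (in pseudometric space X) and T (in Y) are homeomorphic; points at distance 0
   represent the same point of the actual space. *)
Definition homeomorphic {X Y : Type} (S : X -> Prop) (dX : X -> X -> R)
  (T : Y -> Prop) (dY : Y -> Y -> R) : Prop :=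
  exists (f : X -> Y) (g : Y -> X),
    (forall x, S x -> T (f x)) /\ (forall y, T y -> S (g y)) /\
    (forall x, S x -> dX (g (f x)) x = 0) /\ (forall y, T y -> dY (f (g y)) y = 0) /\
    cont_on S dX dY f /\ cont_on T dY dX g.

(* Main.v *)
Require Import Defs.
From Stdlib Require Import Reals Lra Lia Psatz Classical ClassicalEpsilon Bool.
Open Scope R_scope.

Lemma rsum_ext n f g : (forall i, (i < n)%nat -> f i = g i) -> rsum n f = rsum n g.
Proof. induction n; simpl; intros H; auto. rewrite IHn by (intros; apply H; lia). rewrite (H n) by lia. auto. Qed.

Lemma rsum_plus n f g : rsum n (fun i => f i + g i) = rsum n f + rsum n g.
Proof. induction n; simpl; [lra|]. rewrite IHn. lra. Qed.

Lemma rsum_minus n f g : rsum n (fun i => f i - g i) = rsum n f - rsum n g.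
Proof. induction n; simpl; [lra|]. rewrite IHn. lra. Qed.

Lemma rsum_scal_l n c f : rsum n (fun i => c * f i) = c * rsum n f.
Proof. induction n; simpl; [lra|]. rewrite IHn. lra. Qed.

Lemma rsum_scal_r n c f : rsum n (fun i => f i * c) = rsum n f * c.
Proof. induction n; simpl; [lra|]. rewrite IHn. lra. Qed.

Lemma rsum_zero n f : (forall i, (i < n)%nat -> f i = 0) -> rsum n f = 0.
Proof. intros H. rewrite (rsum_ext n f (fun _ => 0)) by auto. clear. induction n; simpl; lra. Qed.

Lemma rsum_swap n m (f : nat -> nat -> R) :
  rsum n (fun a => rsum m (fun b => f a b)) = rsum m (fun b => rsum n (fun a => f a b)).
Proof. induction n; simpl. - symmetry. apply rsum_zero. auto.
  - rewrite IHn. rewrite <- rsum_plus. auto. Qed.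

Lemma rsum_nonneg n f : (forall i, (i < n)%nat -> 0 <= f i) -> 0 <= rsum n f.
Proof. induction n; simpl; intros H; [lra|]. pose proof (H n ltac:(lia)). pose proof (IHn ltac:(intros; apply H; lia)). lra. Qed.

Lemma rsum_le n f g : (forall i, (i < n)%nat -> f i <= g i) -> rsum n f <= rsum n g.
Proof. induction n; simpl; intros H; [lra|]. pose proof (H n ltac:(lia)). pose proof (IHn ltac:(intros; apply H; lia)). lra. Qed.

Lemma rsum_abs n f : Rabs (rsum n f) <= rsum n (fun i => Rabs (f i)).
Proof. induction n; simpl. rewrite Rabs_R0; lra. eapply Rle_trans. apply Rabs_triang. lra. Qed.

Lemma rsum_single_le n f i : (forall j, (j < n)%nat -> 0 <= f j) -> (i < n)%nat -> f i <= rsum n f.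
Proof. induction n; simpl; intros H Hi; [lia|]. destruct (Nat.eq_dec i n).
  - subst. pose proof (rsum_nonneg n f ltac:(intros; apply H; lia)). lra.
  - pose proof (H n ltac:(lia)). pose proof (IHn ltac:(intros; apply H; lia) ltac:(lia)). lra. Qed.

Lemma rsum_nonneg_zero n f : (forall j, (j < n)%nat -> 0 <= f j) -> rsum n f = 0 ->
  forall i, (i < n)%nat -> f i = 0.
Proof. intros H H0 i Hi. pose proof (rsum_single_le n f i H Hi). pose proof (H i Hi). lra. Qed.

Definition del (n m : nat) : R := if Nat.eqb n m then 1 else 0.

Lemma rsum_del_r n (y : nat -> R) j : (j < n)%nat -> rsum n (fun s => y s * del s j) = y j.
Proof. induction n; simpl; intros Hj; [lia|]. unfold del at 2. destruct (Nat.eqb_spec n j).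
  - subst. rewrite rsum_zero. lra. intros i Hi. unfold del. destruct (Nat.eqb_spec i j); [lia|lra].
  - rewrite IHn by lia. lra. Qed.

Lemma rsum_del_l n (y : nat -> R) j : (j < n)%nat -> rsum n (fun s => del j s * y s) = y j.
Proof. intros. rewrite <- (rsum_del_r n y j) by auto. apply rsum_ext. intros. unfold del.
  destruct (Nat.eqb_spec j i), (Nat.eqb_spec i j); try lia; lra. Qed.

Lemma rsum_replace m h l0 x : (l0 < m)%nat ->
  rsum m (fun l => if Nat.eqb l l0 then x else h l) = rsum m h - h l0 + x.
Proof. induction m; simpl; intros Hl; [lia|]. destruct (Nat.eqb_spec m l0).
  - subst. rewrite (rsum_ext _ _ h). lra. intros i Hi. destruct (Nat.eqb_spec i l0); [lia|auto].
  - rewrite IHm by lia. lra. Qed.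

Lemma reidx m h l0 : (l0 < m)%nat ->
  rsum m h = rsum (m-1) (fun l => h (if Nat.eqb l l0 then (m-1)%nat else l)) + h l0.
Proof. intros Hl. destruct m as [|m']; [lia|]. replace (S m' - 1)%nat with m' by lia. simpl.
  destruct (Nat.eq_dec l0 m').
  - subst. rewrite (rsum_ext m' (fun l => h (if Nat.eqb l m' then m' else l)) h). lra. intros i Hi. destruct (Nat.eqb_spec i m'); [lia|auto].
  - rewrite (rsum_ext m' (fun l => h (if Nat.eqb l l0 then m' else l)) (fun l => if Nat.eqb l l0 then h m' else h l)).
    rewrite rsum_replace by lia. lra. intros i Hi. destruct (Nat.eqb_spec i l0); auto. Qed.

Lemma dep (T : Type) (D : T -> Prop) (n : nat) : forall (g : nat -> T -> R) (m : nat)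
  (w : nat -> T -> R) (a : nat -> nat -> R),
  (n < m)%nat ->
  (forall l t, (l < m)%nat -> D t -> w l t = rsum n (fun s => a l s * g s t)) ->
  exists c : nat -> R, (exists l, (l < m)%nat /\ c l <> 0) /\
    forall t, D t -> rsum m (fun l => c l * w l t) = 0.
Proof.
  induction n as [|n IH]; intros g m w a Hnm Hw.
  - exists (fun l => del l 0). split. exists 0%nat. split. lia. unfold del. simpl. lra.
    intros t Ht. apply rsum_zero. intros i Hi. rewrite (Hw i t Hi Ht). simpl. lra.
  - destruct (classic (exists l0, (l0 < m)%nat /\ a l0 n <> 0)) as [[l0 [Hl0 Ha]]|Hno].
    + set (al := a l0 n).
      set (tau := fun l => if Nat.eqb l l0 then (m-1)%nat else l).
      assert (Htau : forall l, (l < m-1)%nat -> (tau l < m)%nat).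
      { intros l Hl. unfold tau. destruct (Nat.eqb l l0); lia. }
      destruct (IH g (m-1)%nat (fun l t => al * w (tau l) t - a (tau l) n * w l0 t)
         (fun l s => al * a (tau l) s - a (tau l) n * a l0 s)) as [c' [[l1 [Hl1 Hc1]] Hc']].
      { lia. }
      { intros l t Hl Ht. rewrite (Hw _ t (Htau l Hl) Ht). rewrite (Hw l0 t Hl0 Ht). simpl.
        rewrite (rsum_ext n (fun s => (al * a (tau l) s - a (tau l) n * a l0 s) * g s t)
          (fun s => al * (a (tau l) s * g s t) - a (tau l) n * (a l0 s * g s t))).
        rewrite rsum_minus, !rsum_scal_l. unfold al. ring. intros; ring. }
      set (K := - rsum (m-1) (fun l => c' l * a (tau l) n)).
      exists (fun x => if Nat.eqb x l0 then K else if Nat.eqb x (m-1) then al * c' l0 else al * c' x).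
      assert (Hc : forall l, (l < m-1)%nat ->
        (if Nat.eqb (tau l) l0 then K else if Nat.eqb (tau l) (m-1) then al * c' l0 else al * c' (tau l))
         = al * c' l).
      { intros l Hl. unfold tau. destruct (Nat.eqb_spec l l0).
        - subst. destruct (Nat.eqb_spec (m-1) l0); [lia|]. rewrite Nat.eqb_refl. auto.
        - destruct (Nat.eqb_spec l l0); [lia|]. destruct (Nat.eqb_spec l (m-1)); [lia|]. auto. }
      split.
      * exists (tau l1). split. auto. cbv beta. intro H0.
        assert (H : al * c' l1 = 0) by (rewrite <- (Hc l1 Hl1); exact H0). apply Rmult_integral in H.
        destruct H; [unfold al in *; contradiction| contradiction].
      * intros t Ht. rewrite (reidx m _ l0 Hl0). fold tau.
        rewrite (rsum_ext (m-1) _ (fun l => al * (c' l * w (tau l) t))).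
        2:{ intros l Hl. cbv beta. change (if l =? l0 then (m - 1)%nat else l) with (tau l). rewrite (Hc l Hl). ring. }
        rewrite Nat.eqb_refl. rewrite rsum_scal_l.
        specialize (Hc' t Ht).
        rewrite (rsum_ext (m-1) _ (fun l => al * (c' l * w (tau l) t) - w l0 t * (c' l * a (tau l) n))) in Hc'.
        2:{ intros; ring. }
        rewrite rsum_minus, !rsum_scal_l in Hc'. unfold K. lra.
    + apply (IH g m w a). lia. intros l t Hl Ht. rewrite (Hw l t Hl Ht). simpl.
      assert (a l n = 0). { apply NNPP. intro. apply Hno. eauto. } rewrite H. ring.
Qed.

Lemma span (T : Type) (D : T -> Prop) (n : nat) (g : nat -> T -> R)
  (w : nat -> T -> R) (a : nat -> nat -> R) :
  (forall l t, (l <= n)%nat -> D t -> w l t = rsum n (fun s => a l s * g s t)) ->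
  (forall b, (forall t, D t -> rsum n (fun l => b l * w l t) = 0) -> forall l, (l < n)%nat -> b l = 0) ->
  exists beta, forall t, D t -> w n t = rsum n (fun l => beta l * w l t).
Proof.
  intros Hw Hind. destruct (dep T D n g (S n) w a ltac:(lia) ltac:(intros; apply Hw; auto; lia))
    as [c [[l1 [Hl1 Hc1]] Hc]].
  destruct (Req_dec (c n) 0) as [Hz|Hnz].
  - exfalso. assert (Hb := Hind c). assert (l1 < n)%nat.
    { destruct (Nat.eq_dec l1 n); [subst; contradiction| lia]. }
    apply Hc1. apply Hb; auto. intros t Ht. specialize (Hc t Ht). simpl in Hc. rewrite Hz in Hc. lra.
  - exists (fun l => - c l / c n). intros t Ht. specialize (Hc t Ht). simpl in Hc.
    rewrite (rsum_ext n _ (fun l => (-/ c n) * (c l * w l t))) by (intros; unfold Rdiv; ring).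
    rewrite rsum_scal_l. field_simplify_eq; auto. lra. 
Qed.

Lemma tri_S k : tri (S k) = (tri k + S k)%nat.
Proof. unfold tri. replace (S k * (S k + 1))%nat with (k * (k+1) + S k * 2)%nat by lia.
  rewrite Nat.div_add by lia. auto. Qed.

Lemma tri_le b c : (b <= c)%nat -> (tri b <= tri c)%nat.
Proof. induction 1; auto. rewrite tri_S. lia. Qed.

Fixpoint dec (s : nat) : nat * nat :=
  match s with
  | O => (0%nat, 0%nat)
  | S s' => let (a, b) := dec s' in if Nat.ltb a b then (S a, b) else (0%nat, S b)
  end.

Lemma dec_inv s : (fst (dec s) <= snd (dec s))%nat /\ s = (tri (snd (dec s)) + fst (dec s))%nat.
Proof. induction s as [|s IH]. simpl. split; auto. 
  simpl. destruct (dec s) as [a b]. simpl in IH. destruct IH as [H1 H2].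
  destruct (Nat.ltb_spec a b); simpl.
  - split; lia.
  - rewrite tri_S. split; lia. Qed.

Lemma dec_tri b : forall a, (a <= b)%nat -> dec (tri b + a) = (a, b).
Proof. induction b as [|b IHb]; intros a Ha.
  - replace a with 0%nat by lia. reflexivity.
  - induction a as [|a IHa].
    + rewrite tri_S. replace (tri b + S b + 0)%nat with (S (tri b + b)) by lia. simpl.
      rewrite IHb by lia. rewrite Nat.ltb_irrefl. auto.
    + replace (tri (S b) + S a)%nat with (S (tri (S b) + a)) by lia. simpl.
      rewrite IHa by lia. destruct (Nat.ltb_spec a (S b)); [auto|lia]. Qed.

Definition gs (s : nat) : mat := fun x y =>
  if orb (andb (Nat.eqb (fst (dec s)) x) (Nat.eqb (snd (dec s)) y)) (andb (Nat.eqb (fst (dec s)) y) (Nat.eqb (snd (dec s)) x))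
  then 1 else 0.

Lemma gs_sym s x y : gs s x y = gs s y x.
Proof. unfold gs. rewrite orb_comm. auto. Qed.

Lemma gs_eval s x y : (x <= y)%nat -> gs s x y = del s (tri y + x).
Proof. intros Hxy. unfold gs, del. destruct (dec_inv s) as [H1 H2].
  destruct (Nat.eqb_spec s (tri y + x)) as [E|E].
  - rewrite E, dec_tri by auto. simpl. rewrite !Nat.eqb_refl. auto.
  - destruct (Nat.eqb_spec (fst (dec s)) x), (Nat.eqb_spec (snd (dec s)) y),
      (Nat.eqb_spec (fst (dec s)) y), (Nat.eqb_spec (snd (dec s)) x); simpl; auto;
    exfalso; apply E; try lia; rewrite H2; f_equal; try f_equal; lia. Qed.

Lemma tri_lt y x k : (x <= y)%nat -> (y < k)%nat -> (tri y + x < tri k)%nat.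
Proof. intros. pose proof (tri_le (S y) k ltac:(lia)). rewrite tri_S in H1. lia. Qed.

Lemma sym_span k Z : sym k Z -> forall x y, (x < k)%nat -> (y < k)%nat ->
  Z x y = rsum (tri k) (fun s => Z (fst (dec s)) (snd (dec s)) * gs s x y).
Proof.
  intros HZ.
  assert (Hle : forall x y, (x <= y)%nat -> (y < k)%nat ->
    Z x y = rsum (tri k) (fun s => Z (fst (dec s)) (snd (dec s)) * gs s x y)).
  { intros x y Hxy Hy. rewrite (rsum_ext _ _ (fun s => Z (fst (dec s)) (snd (dec s)) * del s (tri y + x))).
    rewrite rsum_del_r by (apply tri_lt; auto). rewrite dec_tri by auto. auto.
    intros. rewrite gs_eval; auto. }
  intros x y Hx Hy. destruct (Nat.le_gt_cases x y). apply Hle; auto.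
  rewrite HZ by auto. rewrite Hle by lia. apply rsum_ext. intros. rewrite gs_sym. auto. Qed.

Lemma gen_indep k (ys : nat -> R) :
  (forall x y, (x < k)%nat -> (y < k)%nat -> rsum (tri k) (fun s => ys s * gs s x y) = 0) ->
  forall s, (s < tri k)%nat -> ys s = 0.
Proof. intros H s Hs. destruct (dec_inv s) as [H1 H2].
  set (a := fst (dec s)) in *. set (b := snd (dec s)) in *.
  assert (b < k)%nat. { destruct (Nat.lt_ge_cases b k); auto. pose proof (tri_le k b H0). lia. }
  specialize (H a b ltac:(lia) H0).
  rewrite (rsum_ext _ _ (fun s => ys s * del s (tri b + a))) in H.
  rewrite rsum_del_r in H by (apply tri_lt; auto). rewrite <- H2 in H. auto.
  intros. rewrite gs_eval; auto. Qed.

Definition quad (k : nat) (A : mat) (x : vec) : R :=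
  rsum k (fun a => rsum k (fun b => x a * A a b * x b)).

Lemma rsum_prod n m f g : rsum n (fun a => rsum m (fun b => f a * g b)) = rsum n f * rsum m g.
Proof. rewrite (rsum_ext n _ (fun a => f a * rsum m g)). apply rsum_scal_r.
  intros. apply rsum_scal_l. Qed.

Lemma swap3 n m l (F : nat -> nat -> nat -> R) :
  rsum n (fun a => rsum m (fun b => rsum l (fun r => F a b r))) =
  rsum l (fun r => rsum n (fun a => rsum m (fun b => F a b r))).
Proof. rewrite (rsum_ext n _ (fun a => rsum l (fun r => rsum m (fun b => F a b r)))).
  apply rsum_swap. intros. apply rsum_swap. Qed.

Definition ext (k : nat) (x : vec) (t : R) : vec := fun a => if Nat.eqb a k then t else x a.

Lemma quad_ext k A x y : (forall a, (a < k)%nat -> x a = y a) -> quad k A x = quad k A y.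
Proof. intros H. unfold quad. apply rsum_ext. intros a Ha. apply rsum_ext. intros b Hb.
  rewrite !H; auto. Qed.

Lemma quad_S k A x t : sym (S k) A ->
  quad (S k) A (ext k x t) = quad k A x + 2 * t * rsum k (fun a => x a * A a k) + A k k * t * t.
Proof. intros HA. unfold quad. simpl.
  rewrite rsum_plus.
  assert (E1 : forall a, (a < k)%nat -> ext k x t a = x a).
  { intros a Ha. unfold ext. destruct (Nat.eqb_spec a k); [lia|auto]. }
  assert (E2 : ext k x t k = t). { unfold ext. rewrite Nat.eqb_refl. auto. }
  rewrite E2.
  rewrite (rsum_ext k (fun i => rsum k (fun b => ext k x t i * A i b * ext k x t b)) (fun a => rsum k (fun b => x a * A a b * x b))).
  2:{ intros a Ha. apply rsum_ext. intros b Hb. rewrite !E1; auto. }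
  rewrite (rsum_ext k (fun i => ext k x t i * A i k * t) (fun a => t * (x a * A a k))).
  2:{ intros a Ha. rewrite E1; auto. ring. }
  rewrite (rsum_ext k (fun b => t * A k b * ext k x t b) (fun a => t * (x a * A a k))).
  2:{ intros a Ha. rewrite E1 by auto. rewrite (HA k a) by lia. ring. }
  rewrite !rsum_scal_l. ring. Qed.

Lemma decomp k : forall A, psd k A -> exists X : nat -> vec,
  forall a b, (a < k)%nat -> (b < k)%nat -> A a b = rsum k (fun r => X r a * X r b).
Proof.
  induction k as [|k IH]; intros A [HA Hq].
  - exists (fun _ _ => 0). intros; lia.
  - set (al := A k k).
    set (L := fun x : vec => rsum k (fun a => x a * A a k)).
    assert (E : forall x t, quad (S k) A (ext k x t) = quad k A x + 2 * t * L x + al * t * t).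
    { intros. apply quad_S; auto. }
    assert (Hq0 : forall x, 0 <= quad (S k) A x) by (intros; apply Hq).
    assert (Hal : 0 <= al).
    { pose proof (E (fun _ => 0) 1).
      assert (quad k A (fun _ => 0) = 0). { unfold quad. apply rsum_zero. intros. apply rsum_zero. intros. ring. }
      assert (L (fun _ => 0) = 0). { unfold L. apply rsum_zero. intros. ring. }
      pose proof (Hq0 (ext k (fun _ => 0) 1)). rewrite H in H2. rewrite H0, H1 in H2. lra. }
    destruct (Rle_lt_or_eq_dec 0 al Hal) as [Hpos|Hz].
    + set (A' := fun a b => A a b - A a k * A b k / al).
      assert (HA' : psd k A').
      { split.
        - intros a b Ha Hb. unfold A'. cbv beta. rewrite (HA a b) by lia. unfold Rdiv. ring.
        - intros x. assert (Hx : quad k A' x = quad k A x - L x * L x / al).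
          { unfold quad, A', L. rewrite <- rsum_prod.
            rewrite (rsum_ext k _ (fun a => rsum k (fun b => x a * A a b * x b) - / al * rsum k (fun b => x a * A a k * (x b * A b k)))).
            rewrite rsum_minus, rsum_scal_l. unfold Rdiv. ring.
            intros a Ha. rewrite <- rsum_scal_l, <- rsum_minus. apply rsum_ext. intros. unfold Rdiv. ring. }
          change (0 <= quad k A' x). rewrite Hx. pose proof (Hq0 (ext k x (- L x / al))). rewrite E in H.
          replace (quad k A x - L x * L x / al) with
            (quad k A x + 2 * (- L x / al) * L x + al * (- L x / al) * (- L x / al)) by (field; lra).
          auto. }
      destruct (IH A' HA') as [Y HY].
      exists (fun r a => if Nat.ltb r k then (if Nat.ltb a k then Y r a else 0) else A a k / sqrt al).
      assert (Hs : sqrt al * sqrt al = al) by (apply sqrt_sqrt; lra).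
      assert (Hsp : 0 < sqrt al) by (apply sqrt_lt_R0; lra).
      intros a b Ha Hb. simpl. rewrite Nat.ltb_irrefl.
      destruct (Nat.ltb_spec a k), (Nat.ltb_spec b k).
      * rewrite (rsum_ext k _ (fun r => Y r a * Y r b)).
        2:{ intros r Hr. destruct (Nat.ltb_spec r k); [|lia]. 
            destruct (Nat.ltb_spec a k); [|lia]. destruct (Nat.ltb_spec b k); [|lia]. auto. }
        rewrite <- HY by auto. unfold A'. field_simplify_eq; try lra.
        replace (sqrt al ^ 2) with al by (simpl; lra). unfold al. ring.
      * assert (b = k) by lia. subst b.
        rewrite rsum_zero. 2:{ intros r Hr. destruct (Nat.ltb_spec r k); [|lia]. destruct (Nat.ltb_spec k k); [lia|]. ring. }
        field_simplify_eq; try lra. replace (sqrt al ^ 2) with al by (simpl; lra). unfold al. ring.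
      * assert (a = k) by lia. subst a.
        rewrite rsum_zero. 2:{ intros r Hr. destruct (Nat.ltb_spec r k); [|lia]. destruct (Nat.ltb_spec k k); [lia|]. ring. }
        field_simplify_eq; try lra. replace (sqrt al ^ 2) with al by (simpl; lra). unfold al.
        rewrite (HA k b) by lia. ring.
      * assert (a = k) by lia. assert (b = k) by lia. subst.
        rewrite rsum_zero. 2:{ intros r Hr. destruct (Nat.ltb_spec r k); [|lia]. destruct (Nat.ltb_spec k k); [lia|]. ring. }
        field_simplify_eq; try lra. replace (sqrt al ^ 2) with al by (simpl; lra). unfold al. ring.
    + assert (HL : forall x, L x = 0).
      { intros x. apply NNPP. intros Hn.
        pose proof (Hq0 (ext k x (- (quad k A x + 1) / (2 * L x)))). rewrite E in H.
        rewrite <- Hz in H.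
        replace (quad k A x + 2 * (- (quad k A x + 1) / (2 * L x)) * L x + 0 * (- (quad k A x + 1) / (2 * L x)) * (- (quad k A x + 1) / (2 * L x))) with (-1) in H by (field; auto).
        lra. }
      assert (Hcol : forall b, (b < k)%nat -> A b k = 0).
      { intros b Hb. pose proof (HL (fun a => del b a)). unfold L in H. rewrite rsum_del_l in H; auto. }
      assert (HA0 : psd k A).
      { split. intros a b Ha Hb. apply HA; lia.
        intros x. pose proof (Hq0 (ext k x 0)). rewrite E in H. change (0 <= quad k A x). lra. }
      destruct (IH A HA0) as [Y HY].
      exists (fun r a => if Nat.ltb r k then (if Nat.ltb a k then Y r a else 0) else 0).
      intros a b Ha Hb. simpl. rewrite Nat.ltb_irrefl.
      destruct (Nat.ltb_spec a k), (Nat.ltb_spec b k).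
      * rewrite (rsum_ext k _ (fun r => Y r a * Y r b)).
        2:{ intros r Hr. destruct (Nat.ltb_spec r k); [|lia].
            destruct (Nat.ltb_spec a k); [|lia]. destruct (Nat.ltb_spec b k); [|lia]. auto. }
        rewrite <- HY by auto. ring.
      * assert (b = k) by lia. subst b.
        rewrite rsum_zero. 2:{ intros r Hr. destruct (Nat.ltb_spec r k); [|lia]. destruct (Nat.ltb_spec k k); [lia|]. ring. }
        rewrite Hcol by auto. ring.
      * assert (a = k) by lia. subst a.
        rewrite rsum_zero. 2:{ intros r Hr. destruct (Nat.ltb_spec r k); [|lia]. destruct (Nat.ltb_spec k k); [lia|]. ring. }
        rewrite (HA k b) by lia. rewrite Hcol by auto. ring.
      * assert (a = k) by lia. assert (b = k) by lia. subst.
        rewrite rsum_zero. 2:{ intros r Hr. destruct (Nat.ltb_spec r k); [|lia]. destruct (Nat.ltb_spec k k); [lia|]. ring. }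
        fold al. rewrite <- Hz. ring.
Qed.

Lemma psd_inner k A B : psd k A -> psd k B -> 0 <= inner k A B.
Proof. intros HA [HBs HBq]. destruct (decomp k A HA) as [X HX]. unfold inner.
  rewrite (rsum_ext k _ (fun a => rsum k (fun b => rsum k (fun r => X r a * B a b * X r b)))).
  2:{ intros a Ha. apply rsum_ext. intros b Hb. rewrite HX by auto. rewrite <- rsum_scal_r.
      apply rsum_ext. intros. rewrite (HBs b a) by auto. ring. }
  rewrite swap3. apply rsum_nonneg. intros. apply HBq. Qed.

Definition nrm (k : nat) (Y : mat) : R := rsum k (fun a => rsum k (fun b => Rabs (Y a b))).

Lemma inner_comm k A B : inner k A B = inner k B A.
Proof. unfold inner. rewrite rsum_swap. apply rsum_ext. intros. apply rsum_ext. intros. ring. Qed.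

Lemma inner_ext_r k A B B' : (forall a b, (a < k)%nat -> (b < k)%nat -> B a b = B' a b) ->
  inner k A B = inner k A B'.
Proof. intros H. unfold inner. apply rsum_ext. intros. apply rsum_ext. intros. rewrite H; auto. Qed.

Lemma inner_ext_l k A A' B : (forall a b, (a < k)%nat -> (b < k)%nat -> A a b = A' a b) ->
  inner k A B = inner k A' B.
Proof. intros H. rewrite (inner_comm k A), (inner_comm k A'). apply inner_ext_r; auto. Qed.

Lemma inner_comb_r k A n (beta : nat -> R) (W : nat -> mat) :
  inner k A (fun x y => rsum n (fun m => beta m * W m x y)) = rsum n (fun m => beta m * inner k A (W m)).
Proof. unfold inner.
  rewrite (rsum_ext k _ (fun a => rsum k (fun b => rsum n (fun m => beta m * (A a b * W m b a))))).
  rewrite swap3. apply rsum_ext. intros. rewrite <- rsum_scal_l. apply rsum_ext. intros.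
  rewrite <- rsum_scal_l. auto.
  intros. apply rsum_ext. intros. rewrite <- rsum_scal_l. apply rsum_ext. intros. ring. Qed.

Lemma inner_comb_l k B n (beta : nat -> R) (W : nat -> mat) :
  inner k (fun x y => rsum n (fun m => beta m * W m x y)) B = rsum n (fun m => beta m * inner k (W m) B).
Proof. rewrite inner_comm, inner_comb_r. apply rsum_ext. intros. rewrite inner_comm. auto. Qed.

Lemma inner_minus_r k A B B' : inner k A (fun x y => B x y - B' x y) = inner k A B - inner k A B'.
Proof. unfold inner. rewrite <- rsum_minus. apply rsum_ext. intros. rewrite <- rsum_minus.
  apply rsum_ext. intros. ring. Qed.

Lemma inner_minus_l k A A' B : inner k (fun x y => A x y - A' x y) B = inner k A B - inner k A' B.
Proof. rewrite inner_comm, inner_minus_r, !(inner_comm k B). auto. Qed.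

Lemma inner_zero_r k A B : (forall a b, (a < k)%nat -> (b < k)%nat -> B a b = 0) -> inner k A B = 0.
Proof. intros H. unfold inner. apply rsum_zero. intros. apply rsum_zero. intros. rewrite H; auto. ring. Qed.

Lemma inner_self_zero k Y : sym k Y -> inner k Y Y = 0 -> forall a b, (a < k)%nat -> (b < k)%nat -> Y a b = 0.
Proof. intros HY H0 a b Ha Hb. unfold inner in H0.
  rewrite (rsum_ext k _ (fun a => rsum k (fun b => Y a b * Y a b))) in H0.
  2:{ intros. apply rsum_ext. intros. rewrite (HY i0 i) by auto. auto. }
  assert (H1 := rsum_nonneg_zero k (fun a => rsum k (fun b => Y a b * Y a b))
     ltac:(intros; apply rsum_nonneg; intros; nra) H0 a Ha).
  assert (H2 := rsum_nonneg_zero k (fun b => Y a b * Y a b) ltac:(intros; nra) H1 b Hb). simpl in H2. nra. Qed.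

Lemma nrm_nonneg k Y : 0 <= nrm k Y.
Proof. unfold nrm. apply rsum_nonneg. intros. apply rsum_nonneg. intros. apply Rabs_pos. Qed.

Lemma nrm_ext k Y Y' : (forall a b, (a < k)%nat -> (b < k)%nat -> Rabs (Y a b) = Rabs (Y' a b)) -> nrm k Y = nrm k Y'.
Proof. intros H. unfold nrm. apply rsum_ext. intros. apply rsum_ext. intros. auto. Qed.

Lemma entry_le_nrm k Y a b : (a < k)%nat -> (b < k)%nat -> Rabs (Y a b) <= nrm k Y.
Proof. intros Ha Hb. unfold nrm. eapply Rle_trans.
  2:{ apply (rsum_single_le k _ a). intros. apply rsum_nonneg. intros. apply Rabs_pos. auto. }
  apply (rsum_single_le k (fun b => Rabs (Y a b)) b). intros. apply Rabs_pos. auto. Qed.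

Lemma nrm_comb k n (beta : nat -> R) (W : nat -> mat) :
  nrm k (fun x y => rsum n (fun m => beta m * W m x y)) <= rsum n (fun m => Rabs (beta m) * nrm k (W m)).
Proof. unfold nrm. eapply Rle_trans.
  - apply (rsum_le k _ (fun a => rsum k (fun b => rsum n (fun m => Rabs (beta m) * Rabs (W m a b))))).
    intros. apply rsum_le. intros. eapply Rle_trans. apply rsum_abs. apply rsum_le. intros.
    rewrite Rabs_mult. lra.
  - rewrite swap3. apply Req_le. apply rsum_ext. intros. rewrite <- rsum_scal_l. apply rsum_ext. intros.
    rewrite <- rsum_scal_l. auto. Qed.

Lemma nrm_tri k X E : nrm k (fun a b => X a b + E a b) <= nrm k X + nrm k E.
Proof. unfold nrm. rewrite <- rsum_plus. apply rsum_le. intros. rewrite <- rsum_plus. apply rsum_le.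
  intros. apply Rabs_triang. Qed.

Lemma inner_bound k C Y : Rabs (inner k C Y) <= nrm k C * nrm k Y.
Proof. unfold inner. eapply Rle_trans. apply rsum_abs. unfold nrm at 1. rewrite <- rsum_scal_r.
  apply rsum_le. intros. eapply Rle_trans. apply rsum_abs. rewrite <- rsum_scal_r. apply rsum_le.
  intros. rewrite Rabs_mult. apply Rmult_le_compat_l. apply Rabs_pos. apply entry_le_nrm; auto. Qed.

Lemma del_sym a b : del a b = del b a.
Proof. unfold del. destruct (Nat.eqb_spec a b), (Nat.eqb_spec b a); auto; lia. Qed.

Lemma fact_span p q k M (c : nat -> nat) (A B : nat -> mat)
  (Hc : forall l, (l < tri k)%nat -> (c l < q)%nat)
  (Hli : lin_indep p (tri k) (fun l i => M i (c l)))
  (HBs : forall j, (j < q)%nat -> sym k (B j))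
  (HM : forall i j, (i < p)%nat -> (j < q)%nat -> M i j = inner k (A i) (B j)) :
  forall Z, sym k Z -> exists beta, forall x y, (x < k)%nat -> (y < k)%nat ->
    Z x y = rsum (tri k) (fun m => beta m * B (c m) x y).
Proof.
  intros Z HZ. set (W := fun l => if Nat.ltb l (tri k) then B (c l) else Z).
  assert (HW : forall l, (l < tri k)%nat -> W l = B (c l)).
  { intros l Hl. unfold W. rewrite (proj2 (Nat.ltb_lt _ _) Hl). auto. }
  destruct (span (nat * nat) (fun t => (fst t < k)%nat /\ (snd t < k)%nat) (tri k)
    (fun s t => gs s (fst t) (snd t)) (fun l t => W l (fst t) (snd t))
    (fun l s => W l (fst (dec s)) (snd (dec s)))) as [beta Hbeta].
  - intros l t Hl [Ht1 Ht2]. apply sym_span; auto. unfold W. destruct (Nat.ltb_spec l (tri k)); auto.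
  - intros b Hb l Hl. apply Hli; auto. intros i Hi.
    rewrite (rsum_ext _ _ (fun l => b l * inner k (A i) (B (c l)))) by (intros; rewrite HM; auto).
    rewrite <- inner_comb_r. apply inner_zero_r. intros x y Hx Hy.
    specialize (Hb (x, y) (conj Hx Hy)). simpl in Hb. rewrite <- Hb. apply rsum_ext. intros.
    rewrite HW; auto.
  - exists beta. intros x y Hx Hy. specialize (Hbeta (x, y) (conj Hx Hy)). simpl in Hbeta.
    unfold W at 1 in Hbeta. rewrite Nat.ltb_irrefl in Hbeta. rewrite Hbeta. apply rsum_ext. intros.
    rewrite HW; auto. Qed.

Lemma orth_A p q k M (c : nat -> nat) (A B : nat -> mat)
  (Hc : forall l, (l < tri k)%nat -> (c l < q)%nat)
  (Hli : lin_indep p (tri k) (fun l i => M i (c l)))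
  (HBs : forall j, (j < q)%nat -> sym k (B j))
  (HM : forall i j, (i < p)%nat -> (j < q)%nat -> M i j = inner k (A i) (B j)) :
  forall Z, sym k Z -> (forall i, (i < p)%nat -> inner k (A i) Z = 0) ->
  forall x y, (x < k)%nat -> (y < k)%nat -> Z x y = 0.
Proof.
  intros Z HZ HA. destruct (fact_span p q k M c A B Hc Hli HBs HM Z HZ) as [beta Hb].
  assert (H0 : forall l, (l < tri k)%nat -> beta l = 0).
  { apply Hli. intros i Hi.
    rewrite (rsum_ext _ _ (fun l => beta l * inner k (A i) (B (c l)))) by (intros; rewrite HM; auto).
    rewrite <- inner_comb_r. rewrite <- (HA i Hi). symmetry. apply inner_ext_r. auto. }
  intros x y Hx Hy. rewrite Hb by auto. apply rsum_zero. intros. rewrite H0; auto. ring. Qed.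

Lemma orth_B p q k M (c : nat -> nat) (A B : nat -> mat)
  (Hc : forall l, (l < tri k)%nat -> (c l < q)%nat)
  (Hli : lin_indep p (tri k) (fun l i => M i (c l)))
  (HBs : forall j, (j < q)%nat -> sym k (B j))
  (HM : forall i j, (i < p)%nat -> (j < q)%nat -> M i j = inner k (A i) (B j)) :
  forall Y, sym k Y -> (forall j, (j < q)%nat -> inner k Y (B j) = 0) ->
  forall x y, (x < k)%nat -> (y < k)%nat -> Y x y = 0.
Proof.
  intros Y HY HB. destruct (fact_span p q k M c A B Hc Hli HBs HM Y HY) as [beta Hb].
  apply inner_self_zero; auto.
  rewrite (inner_ext_r k Y Y (fun x y => rsum (tri k) (fun m => beta m * B (c m) x y))) by auto.
  rewrite inner_comb_r. apply rsum_zero. intros. rewrite HB by auto. ring. Qed.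

Lemma vc_inv p q k M (c : nat -> nat) (U V : mat)
  (Hc : forall l, (l < tri k)%nat -> (c l < q)%nat)
  (Hli : lin_indep p (tri k) (fun l i => M i (c l)))
  (HUV : forall i j, (i < p)%nat -> (j < q)%nat -> M i j = rsum (tri k) (fun l => U i l * V l j)) :
  forall l, exists gam : nat -> R, forall n, (n < tri k)%nat ->
    rsum (tri k) (fun m => gam m * V n (c m)) = del n l.
Proof.
  intros l. set (d := tri k) in *.
  set (w := fun m n => if Nat.ltb m d then V n (c m) else del n l).
  assert (Hw : forall m n, (m < d)%nat -> w m n = V n (c m)).
  { intros m n Hm. unfold w. rewrite (proj2 (Nat.ltb_lt _ _) Hm). auto. }
  destruct (span nat (fun n => (n < d)%nat) d (fun s n => del s n) w (fun m s => w m s)) as [beta Hbeta].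
  - intros m n Hm Hn. rewrite rsum_del_r; auto.
  - intros b Hb m Hm. apply Hli; auto. intros i Hi.
    rewrite (rsum_ext _ _ (fun m => rsum d (fun n => U i n * (b m * V n (c m))))).
    2:{ intros m' Hm'. rewrite HUV by auto. rewrite <- rsum_scal_l. apply rsum_ext. intros. ring. }
    rewrite rsum_swap. apply rsum_zero. intros n Hn. rewrite rsum_scal_l.
    specialize (Hb n Hn). rewrite (rsum_ext _ _ (fun l => b l * V n (c l))) in Hb.
    rewrite Hb. ring. intros. rewrite Hw; auto.
  - exists beta. intros n Hn. specialize (Hbeta n Hn). unfold w at 1 in Hbeta.
    rewrite Nat.ltb_irrefl in Hbeta. rewrite Hbeta. apply rsum_ext. intros. rewrite Hw; auto. Qed.

Definition fmap (d : nat) (G : nat -> nat -> R) (c : nat -> nat) (AB : (nat -> mat) * (nat -> mat)) : nat -> mat :=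
  fun l x y => rsum d (fun m => G m l * snd AB (c m) x y).
Definition gB (d : nat) (V : mat) (C : nat -> mat) : nat -> mat :=
  fun j x y => rsum d (fun l => V l j * C l x y).
Definition gA (k d : nat) (U : mat) (C : nat -> mat) : nat -> mat :=
  fun i => epsilon (inhabits (fun _ _ => 0)) (fun X : mat => psd k X /\ forall l, (l < d)%nat -> U i l = apply_lin k C X l).
Definition gmap k d U V C := (gA k d U C, gB d V C).

Lemma gA_spec p q k U V C : DeltaPQ p q k (tri k) U V C ->
  forall i, (i < p)%nat -> psd k (gA k (tri k) U C i) /\ forall l, (l < tri k)%nat -> U i l = apply_lin k C (gA k (tri k) U C i) l.
Proof. intros [_ [HP _]] i Hi. unfold gA. apply epsilon_spec.
  apply (HP (fun l => U i l)). exists (fun i' => del i i'). split.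
  intros. unfold del. destruct (Nat.eqb i i0); lra.
  intros l Hl. rewrite rsum_del_l; auto. Qed.

Lemma psd_xx k (x : vec) : psd k (fun a b => x a * x b).
Proof. split. intros a b _ _. ring. intros y. unfold quad.
  rewrite (rsum_ext k _ (fun a => rsum k (fun b => (y a * x a) * (x b * y b)))).
  rewrite rsum_prod. rewrite (rsum_ext k (fun b => x b * y b) (fun a => y a * x a)) by (intros; ring).
  nra. intros. apply rsum_ext. intros. ring. Qed.

Lemma g_SF p q k M U V C
  (HUV : forall i j, (i < p)%nat -> (j < q)%nat -> M i j = rsum (tri k) (fun l => U i l * V l j)) :
  DeltaPQ p q k (tri k) U V C -> SF p q k M (gmap k (tri k) U V C).
Proof. intros HD. pose proof (gA_spec p q k U V C HD) as HA. destruct HD as [Hlin [HP HQ]].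
  unfold SF, gmap, is_psd_fact. simpl. split; [|split].
  - intros i Hi. apply HA; auto.
  - intros j Hj. split.
    + intros a b Ha Hb. unfold gB. apply rsum_ext. intros l Hl. rewrite (Hlin l Hl a b) by auto. auto.
    + intros x. specialize (HQ (fun a b => x a * x b) (psd_xx k x) j Hj).
      assert (E : rsum (tri k) (fun l => V l j * apply_lin k C (fun a b => x a * x b) l) =
        rsum k (fun a => rsum k (fun b => x a * gB (tri k) V C j a b * x b))).
      { unfold apply_lin, inner, gB.
        rewrite (rsum_ext (tri k) _ (fun l => rsum k (fun a => rsum k (fun b => V l j * (C l a b * x b * x a))))).
        rewrite <- swap3. apply rsum_ext. intros. apply rsum_ext. intros.
        rewrite <- rsum_scal_l, <- rsum_scal_r. apply rsum_ext. intros. ring.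
        intros. rewrite <- rsum_scal_l. apply rsum_ext. intros. rewrite <- rsum_scal_l. apply rsum_ext. intros. ring. }
      rewrite <- E. auto.
  - intros i j Hi Hj. rewrite HUV by auto. unfold gB. rewrite inner_comb_r. apply rsum_ext.
    intros l Hl. destruct (HA i Hi) as [_ HU]. rewrite HU by auto. unfold apply_lin. rewrite inner_comm. ring.
Qed.


Lemma f_piA p q k M c G U V AB
  (Hc : forall l, (l < tri k)%nat -> (c l < q)%nat)
  (HUV : forall i j, (i < p)%nat -> (j < q)%nat -> M i j = rsum (tri k) (fun l => U i l * V l j))
  (HG : forall n l, (n < tri k)%nat -> rsum (tri k) (fun m => G m l * V n (c m)) = del n l)
  (HAB : SF p q k M AB) :
  forall i l, (i < p)%nat -> (l < tri k)%nat -> apply_lin k (fmap (tri k) G c AB) (fst AB i) l = U i l.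
Proof. intros i l Hi Hl. destruct HAB as [HA [HB HM]]. unfold apply_lin, fmap.
  rewrite inner_comb_l.
  rewrite (rsum_ext _ _ (fun m => rsum (tri k) (fun n => U i n * (G m l * V n (c m))))).
  2:{ intros m Hm. rewrite inner_comm, <- HM by auto. rewrite HUV by auto. rewrite <- rsum_scal_l.
      apply rsum_ext. intros. ring. }
  rewrite rsum_swap. rewrite (rsum_ext _ _ (fun n => U i n * del n l)).
  apply rsum_del_r; auto. intros. rewrite rsum_scal_l, HG; auto. Qed.

Lemma f_sym p q k M c G AB (Hc : forall l, (l < tri k)%nat -> (c l < q)%nat)
  (HAB : SF p q k M AB) : forall l, sym k (fmap (tri k) G c AB l).
Proof. intros l a b Ha Hb. destruct HAB as [HA [HB HM]]. unfold fmap. apply rsum_ext. intros m Hm.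
  destruct (HB (c m) (Hc m Hm)) as [Hs _]. rewrite Hs; auto. Qed.

Lemma f_BREC p q k M c G U V AB
  (Hc : forall l, (l < tri k)%nat -> (c l < q)%nat)
  (Hli : lin_indep p (tri k) (fun l i => M i (c l)))
  (HUV : forall i j, (i < p)%nat -> (j < q)%nat -> M i j = rsum (tri k) (fun l => U i l * V l j))
  (HG : forall n l, (n < tri k)%nat -> rsum (tri k) (fun m => G m l * V n (c m)) = del n l)
  (HAB : SF p q k M AB) :
  forall j x y, (j < q)%nat -> (x < k)%nat -> (y < k)%nat ->
    rsum (tri k) (fun l => V l j * fmap (tri k) G c AB l x y) = snd AB j x y.
Proof. intros j x y Hj Hx Hy.
  pose proof (f_piA p q k M c G U V AB Hc HUV HG HAB) as HpiA.
  pose proof (f_sym p q k M c G AB Hc HAB) as Hfs.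
  destruct HAB as [HA [HB HM]].
  assert (HBs : forall j, (j < q)%nat -> sym k (snd AB j)) by (intros; apply HB; auto).
  set (Z := fun x y => rsum (tri k) (fun l => V l j * fmap (tri k) G c AB l x y) - snd AB j x y).
  assert (HZ : forall x y, (x < k)%nat -> (y < k)%nat -> Z x y = 0).
  { apply (orth_A p q k M c (fst AB) (snd AB) Hc Hli HBs HM).
    - intros a b Ha Hb. unfold Z. rewrite (HBs j Hj a b) by auto. f_equal. apply rsum_ext.
      intros. rewrite (Hfs i a b) by auto. auto.
    - intros i Hi. unfold Z. rewrite inner_minus_r. rewrite <- HM by auto. rewrite inner_comb_r.
      rewrite (rsum_ext _ _ (fun l => U i l * V l j)). rewrite HUV by auto. ring.
      intros l Hl. rewrite inner_comm. rewrite <- (HpiA i l Hi Hl). unfold apply_lin. ring. }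
  specialize (HZ x y Hx Hy). unfold Z in HZ. lra. Qed.

Lemma f_Delta p q k M c G U V AB
  (Hc : forall l, (l < tri k)%nat -> (c l < q)%nat)
  (Hli : lin_indep p (tri k) (fun l i => M i (c l)))
  (HUV : forall i j, (i < p)%nat -> (j < q)%nat -> M i j = rsum (tri k) (fun l => U i l * V l j))
  (HG : forall n l, (n < tri k)%nat -> rsum (tri k) (fun m => G m l * V n (c m)) = del n l)
  (HAB : SF p q k M AB) : DeltaPQ p q k (tri k) U V (fmap (tri k) G c AB).
Proof.
  pose proof (f_piA p q k M c G U V AB Hc HUV HG HAB) as HpiA.
  pose proof (f_sym p q k M c G AB Hc HAB) as Hfs.
  pose proof (f_BREC p q k M c G U V AB Hc Hli HUV HG HAB) as HBR.
  pose proof HAB as [HA [HB HM]].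
  split; [|split].
  - intros l _. apply Hfs.
  - intros x [lam [Hlam Hx]]. exists (fun a b => rsum p (fun i => lam i * fst AB i a b)). split.
    + split.
      * intros a b Ha Hb. apply rsum_ext. intros i Hi. destruct (HA i Hi) as [Hs _]. rewrite Hs; auto.
      * intros y. 
        rewrite (rsum_ext k _ (fun a => rsum k (fun b => rsum p (fun i => lam i * (y a * fst AB i a b * y b))))).
        rewrite swap3. apply rsum_nonneg. intros i Hi. rewrite (rsum_ext k _ (fun a => lam i * rsum k (fun b => y a * fst AB i a b * y b))).
        rewrite rsum_scal_l. apply Rmult_le_pos. auto. apply (HA i Hi).
        intros. rewrite <- rsum_scal_l. auto.
        intros. apply rsum_ext. intros. rewrite <- rsum_scal_l, <- rsum_scal_r. apply rsum_ext. intros. ring.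
    + intros l Hl. rewrite Hx by auto. unfold apply_lin. rewrite inner_comb_r. apply rsum_ext.
      intros i Hi. rewrite <- (HpiA i l Hi Hl). auto.
  - intros X HX j Hj. 
    assert (E : rsum (tri k) (fun l => V l j * apply_lin k (fmap (tri k) G c AB) X l) = inner k (snd AB j) X).
    { unfold apply_lin. rewrite <- inner_comb_l. apply inner_ext_l. intros. apply HBR; auto. }
    rewrite E. apply psd_inner; auto.
Qed.

Lemma fg k c G U V C
  (HG : forall n l, (n < tri k)%nat -> rsum (tri k) (fun m => G m l * V n (c m)) = del n l) :
  dLin k (tri k) (fmap (tri k) G c (gmap k (tri k) U V C)) C = 0.
Proof. unfold dLin. apply rsum_zero. intros l Hl. apply rsum_zero. intros a Ha. apply rsum_zero. intros b Hb.
  unfold fmap, gmap, gB. simpl.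
  rewrite (rsum_ext _ _ (fun m => rsum (tri k) (fun n => C n a b * (G m l * V n (c m))))).
  2:{ intros. rewrite <- rsum_scal_l. apply rsum_ext. intros. ring. }
  rewrite rsum_swap. rewrite (rsum_ext _ _ (fun n => C n a b * del n l)).
  rewrite rsum_del_r by auto. rewrite Rminus_diag. apply Rabs_R0.
  intros. rewrite rsum_scal_l, HG; auto. Qed.

Lemma inj p q k M c V A B C
  (Hc : forall l, (l < tri k)%nat -> (c l < q)%nat)
  (Hli : lin_indep p (tri k) (fun l i => M i (c l)))
  (HBs : forall j, (j < q)%nat -> sym k (B j))
  (HM : forall i j, (i < p)%nat -> (j < q)%nat -> M i j = inner k (A i) (B j))
  (HBC : forall j x y, (j < q)%nat -> (x < k)%nat -> (y < k)%nat ->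
     rsum (tri k) (fun l => V l j * C l x y) = B j x y) :
  forall Y, sym k Y -> (forall l, (l < tri k)%nat -> apply_lin k C Y l = 0) ->
  forall x y, (x < k)%nat -> (y < k)%nat -> Y x y = 0.
Proof. intros Y HY H0. apply (orth_B p q k M c A B Hc Hli HBs HM Y HY).
  intros j Hj. rewrite (inner_ext_r k Y (B j) (fun x y => rsum (tri k) (fun l => V l j * C l x y))).
  rewrite inner_comb_r. apply rsum_zero. intros l Hl. rewrite inner_comm. 
  change (inner k (C l) Y) with (apply_lin k C Y l). rewrite H0; auto. ring.
  intros. rewrite HBC; auto. Qed.

Lemma gf p q k M c G U V AB
  (Hc : forall l, (l < tri k)%nat -> (c l < q)%nat)
  (Hli : lin_indep p (tri k) (fun l i => M i (c l)))
  (HUV : forall i j, (i < p)%nat -> (j < q)%nat -> M i j = rsum (tri k) (fun l => U i l * V l j))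
  (HG : forall n l, (n < tri k)%nat -> rsum (tri k) (fun m => G m l * V n (c m)) = del n l)
  (HAB : SF p q k M AB) :
  dSF p q k (gmap k (tri k) U V (fmap (tri k) G c AB)) AB = 0.
Proof.
  pose proof (f_piA p q k M c G U V AB Hc HUV HG HAB) as HpiA.
  pose proof (f_BREC p q k M c G U V AB Hc Hli HUV HG HAB) as HBR.
  pose proof (f_Delta p q k M c G U V AB Hc Hli HUV HG HAB) as HD.
  pose proof (gA_spec p q k U V _ HD) as HgA.
  pose proof HAB as [HA [HB HM]].
  assert (HBs : forall j, (j < q)%nat -> sym k (snd AB j)) by (intros; apply HB; auto).
  unfold dSF, gmap. simpl. rewrite !rsum_zero. ring.
  - intros j Hj. apply rsum_zero. intros a Ha. apply rsum_zero. intros b Hb. unfold gB.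
    rewrite HBR by auto. rewrite Rminus_diag. apply Rabs_R0.
  - intros i Hi. 
    assert (E := inj p q k M c V (fst AB) (snd AB) (fmap (tri k) G c AB) Hc Hli HBs HM HBR
      (fun x y => gA k (tri k) U (fmap (tri k) G c AB) i x y - fst AB i x y)).
    apply rsum_zero. intros a Ha. apply rsum_zero. intros b Hb. rewrite E; auto. apply Rabs_R0.
    + intros x y Hx Hy. destruct (HgA i Hi) as [[Hs _] _]. destruct (HA i Hi) as [Hs' _].
      rewrite Hs, Hs'; auto.
    + intros l Hl. unfold apply_lin. rewrite inner_minus_r.
      change (inner k (fmap (tri k) G c AB l) (gA k (tri k) U (fmap (tri k) G c AB) i)) with
        (apply_lin k (fmap (tri k) G c AB) (gA k (tri k) U (fmap (tri k) G c AB) i) l).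
      change (inner k (fmap (tri k) G c AB l) (fst AB i)) with (apply_lin k (fmap (tri k) G c AB) (fst AB i) l).
      rewrite HpiA by auto. destruct (HgA i Hi) as [_ HU]. rewrite <- HU by auto. ring.
Qed.

Lemma kappa p q k M c U V C
  (Hc : forall l, (l < tri k)%nat -> (c l < q)%nat)
  (Hli : lin_indep p (tri k) (fun l i => M i (c l)))
  (HUV : forall i j, (i < p)%nat -> (j < q)%nat -> M i j = rsum (tri k) (fun l => U i l * V l j))
  (HD : DeltaPQ p q k (tri k) U V C) :
  exists kap, 0 < kap /\ forall Y, sym k Y ->
    nrm k Y <= kap * rsum (tri k) (fun l => Rabs (apply_lin k C Y l)).
Proof.
  set (d := tri k) in *.
  pose proof (g_SF p q k M U V C HUV HD) as HS.
  destruct HS as [HA [HB HM]]. simpl in HA, HB, HM.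
  assert (HBs : forall j, (j < q)%nat -> sym k (gB d V C j)) by (intros; apply HB; auto).
  assert (HI := inj p q k M c V (gA k d U C) (gB d V C) C Hc Hli HBs HM ltac:(intros; reflexivity)).
  destruct HD as [Hlin _].
  assert (Hsurj : forall m, exists D, sym k D /\ forall l, (l < d)%nat -> apply_lin k C D l = del l m).
  { intros m.
    set (w := fun s n => if Nat.ltb s d then apply_lin k C (gs s) n else del n m).
    assert (Hw : forall s n, (s < d)%nat -> w s n = apply_lin k C (gs s) n).
    { intros s n Hs. unfold w. rewrite (proj2 (Nat.ltb_lt _ _) Hs). auto. }
    destruct (span nat (fun n => (n < d)%nat) d (fun s n => del s n) w (fun l s => w l s)) as [beta Hbeta].
    - intros. rewrite rsum_del_r; auto.
    - intros b Hb. apply (gen_indep k b). intros x y Hx Hy.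
      apply (HI (fun x y => rsum d (fun s => b s * gs s x y))); auto.
      + intros a a' Ha Ha'. apply rsum_ext. intros. rewrite gs_sym. auto.
      + intros l Hl. unfold apply_lin. rewrite inner_comb_r. rewrite <- (Hb l Hl). apply rsum_ext.
        intros. rewrite Hw; auto.
    - exists (fun x y => rsum d (fun s => beta s * gs s x y)). split.
      + intros a a' Ha Ha'. apply rsum_ext. intros. rewrite gs_sym. auto.
      + intros l Hl. unfold apply_lin. rewrite inner_comb_r. specialize (Hbeta l Hl).
        unfold w at 1 in Hbeta. rewrite Nat.ltb_irrefl in Hbeta. rewrite Hbeta.
        apply rsum_ext. intros. rewrite Hw; auto. }
  set (Dm := fun m => epsilon (inhabits (fun _ _ => 0)) (fun D : mat => sym k D /\ forall l, (l < d)%nat -> apply_lin k C D l = del l m)).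
  assert (HDm : forall m, sym k (Dm m) /\ forall l, (l < d)%nat -> apply_lin k C (Dm m) l = del l m).
  { intros m. unfold Dm. apply epsilon_spec. apply Hsurj. }
  set (kap := 1 + rsum d (fun m => nrm k (Dm m))).
  assert (Hk0 : 0 <= rsum d (fun m => nrm k (Dm m))) by (apply rsum_nonneg; intros; apply nrm_nonneg).
  exists kap. split. unfold kap. lra.
  intros Y HY.
  set (Y' := fun x y => rsum d (fun m => apply_lin k C Y m * Dm m x y)).
  assert (HYY : forall x y, (x < k)%nat -> (y < k)%nat -> Y x y - Y' x y = 0).
  { apply (HI (fun x y => Y x y - Y' x y)).
    - intros a b Ha Hb. unfold Y'. rewrite (HY a b) by auto. f_equal. apply rsum_ext. intros.
      destruct (HDm i) as [Hs _]. rewrite Hs; auto.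
    - intros l Hl. unfold apply_lin at 1. rewrite inner_minus_r. unfold Y'. rewrite inner_comb_r.
      rewrite (rsum_ext _ _ (fun m => apply_lin k C Y m * del m l)). rewrite rsum_del_r by auto.
      unfold apply_lin. ring.
      intros m Hm. destruct (HDm m) as [_ HDl]. change (inner k (C l) (Dm m)) with (apply_lin k C (Dm m) l). rewrite HDl by auto. rewrite del_sym. auto. }
  rewrite (nrm_ext k Y Y'). 2:{ intros. specialize (HYY a b H H0). f_equal. lra. }
  eapply Rle_trans. apply nrm_comb. rewrite <- rsum_scal_l. apply rsum_le. intros m Hm.
  assert (nrm k (Dm m) <= kap).
  { unfold kap. pose proof (rsum_single_le d (fun m => nrm k (Dm m)) m ltac:(intros; apply nrm_nonneg) Hm). simpl in *. lra. }
  pose proof (Rabs_pos (apply_lin k C Y m)). nra.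
Qed.

Lemma dSF_B_le p q k (X Y : (nat -> mat) * (nat -> mat)) j : (j < q)%nat ->
  nrm k (fun a b => snd X j a b - snd Y j a b) <= dSF p q k X Y.
Proof. intros Hj. unfold dSF.
  assert (0 <= rsum p (fun i => rsum k (fun a => rsum k (fun b => Rabs (fst X i a b - fst Y i a b))))).
  { apply rsum_nonneg. intros. apply (nrm_nonneg k (fun a b => fst X i a b - fst Y i a b)). }
  pose proof (rsum_single_le q (fun j => nrm k (fun a b => snd X j a b - snd Y j a b)) j
    ltac:(intros; apply nrm_nonneg) Hj). unfold nrm in *. cbv beta in *. lra. Qed.

Lemma f_cont p q k M c G (Hc : forall l, (l < tri k)%nat -> (c l < q)%nat) :
  cont_on (SF p q k M) (dSF p q k) (dLin k (tri k)) (fmap (tri k) G c).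
Proof.
  intros x _ eps Heps. set (d := tri k) in *.
  set (KG := rsum d (fun l => rsum d (fun m => Rabs (G m l)))).
  assert (HKG : 0 <= KG) by (apply rsum_nonneg; intros; apply rsum_nonneg; intros; apply Rabs_pos).
  exists (eps / (KG + 1)). split. apply Rdiv_lt_0_compat; lra.
  intros x' _ Hd. set (E := dSF p q k x x') in *.
  assert (HE0 : 0 <= E).
  { unfold E, dSF. apply Rplus_le_le_0_compat; apply rsum_nonneg; intros; apply rsum_nonneg; intros;
    apply rsum_nonneg; intros; apply Rabs_pos. }
  assert (Hb : dLin k d (fmap d G c x) (fmap d G c x') <= KG * E).
  { change (dLin k d (fmap d G c x) (fmap d G c x')) with
      (rsum d (fun l => nrm k (fun a b => fmap d G c x l a b - fmap d G c x' l a b))).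
    unfold KG. rewrite <- rsum_scal_r. apply rsum_le. intros l Hl.
    rewrite (nrm_ext k _ (fun a b => rsum d (fun m => G m l * (snd x (c m) a b - snd x' (c m) a b)))).
    2:{ intros. unfold fmap. rewrite <- rsum_minus. f_equal. apply rsum_ext. intros. ring. }
    eapply Rle_trans. apply nrm_comb. rewrite <- rsum_scal_r. apply rsum_le. intros m Hm.
    apply Rmult_le_compat_l. apply Rabs_pos. apply dSF_B_le. auto. }
  assert (KG * E <= (KG + 1) * E) by nra.
  assert ((KG + 1) * E < (KG + 1) * (eps / (KG + 1))) by (apply Rmult_lt_compat_l; lra).
  replace ((KG + 1) * (eps / (KG + 1))) with eps in H0 by (field; lra). lra.
Qed.

Lemma g_cont p q k M c U V
  (Hc : forall l, (l < tri k)%nat -> (c l < q)%nat)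
  (Hli : lin_indep p (tri k) (fun l i => M i (c l)))
  (HUV : forall i j, (i < p)%nat -> (j < q)%nat -> M i j = rsum (tri k) (fun l => U i l * V l j)) :
  cont_on (DeltaPQ p q k (tri k) U V) (dLin k (tri k)) (dSF p q k) (gmap k (tri k) U V).
Proof.
  intros C HC eps Heps. set (d := tri k) in *.
  destruct (kappa p q k M c U V C Hc Hli HUV HC) as [kap [Hkap Hk]].
  pose proof (gA_spec p q k U V C HC) as HgA.
  set (NX := rsum p (fun i => nrm k (gA k d U C i))).
  set (KV := rsum q (fun j => rsum d (fun l => Rabs (V l j)))).
  assert (HNX : 0 <= NX) by (apply rsum_nonneg; intros; apply nrm_nonneg).
  assert (HKV : 0 <= KV) by (apply rsum_nonneg; intros; apply rsum_nonneg; intros; apply Rabs_pos).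
  set (K := 2 * kap * NX + KV).
  assert (HK : 0 <= K) by (unfold K; nra).
  exists (Rmin (/ (2 * kap)) (eps / (K + 1))). split.
  { apply Rmin_pos. apply Rinv_0_lt_compat. lra. apply Rdiv_lt_0_compat; lra. }
  intros C' HC' Hd. set (dl := dLin k d C C') in *.
  assert (Hdl0 : 0 <= dl).
  { unfold dl, dLin. apply rsum_nonneg; intros; apply rsum_nonneg; intros; apply rsum_nonneg; intros; apply Rabs_pos. }
  assert (Hd1 : dl < / (2 * kap)) by (eapply Rlt_le_trans; [apply Hd| apply Rmin_l]).
  assert (Hd2 : dl < eps / (K + 1)) by (eapply Rlt_le_trans; [apply Hd| apply Rmin_r]).
  assert (Hkd : kap * dl <= / 2).
  { assert (kap * dl < kap * / (2 * kap)) by (apply Rmult_lt_compat_l; lra).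
    replace (kap * / (2 * kap)) with (/ 2) in H by (field; lra). lra. }
  assert (HCl : forall l, (l < d)%nat -> nrm k (fun a b => C l a b - C' l a b) <= dl).
  { intros l Hl. unfold dl. change (dLin k d C C') with (rsum d (fun l => nrm k (fun a b => C l a b - C' l a b))).
    apply (rsum_single_le d (fun l => nrm k (fun a b => C l a b - C' l a b))); auto. intros; apply nrm_nonneg. }
  pose proof (gA_spec p q k U V C' HC') as HgA'.
  assert (HApart : forall i, (i < p)%nat ->
    nrm k (fun a b => gA k d U C i a b - gA k d U C' i a b) <= 2 * kap * dl * nrm k (gA k d U C i)).
  { intros i Hi. set (X := gA k d U C i) in *. set (X' := gA k d U C' i) in *.
    destruct (HgA i Hi) as [[HXs _] HXU]. destruct (HgA' i Hi) as [[HX's _] HX'U].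
    set (E := fun a b => X' a b - X a b).
    assert (HEs : sym k E) by (intros a b Ha Hb; unfold E; rewrite HXs, HX's; auto).
    assert (H1 : nrm k E <= kap * (dl * nrm k X')).
    { eapply Rle_trans. apply Hk; auto. apply Rmult_le_compat_l. lra.
      unfold dl. change (dLin k d C C') with (rsum d (fun l => nrm k (fun a b => C l a b - C' l a b))).
      rewrite <- rsum_scal_r. apply rsum_le. intros l Hl.
      assert (apply_lin k C E l = inner k (fun a b => C l a b - C' l a b) X').
      { unfold apply_lin, E. rewrite inner_minus_r, inner_minus_l.
        change (inner k (C l) X) with (apply_lin k C X l). change (inner k (C' l) X') with (apply_lin k C' X' l).
        rewrite <- HXU, <- HX'U by auto. ring. }
      rewrite H. apply inner_bound. }
    assert (H2 : nrm k X' <= nrm k X + nrm k E).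
    { rewrite (nrm_ext k X' (fun a b => X a b + E a b)). apply nrm_tri. intros. unfold E. f_equal. ring. }
    assert (H3 : nrm k E <= 2 * kap * dl * nrm k X).
    { pose proof (nrm_nonneg k E). pose proof (nrm_nonneg k X). 
      assert (nrm k E <= kap * dl * (nrm k X + nrm k E)).
      { eapply Rle_trans. apply H1. rewrite <- Rmult_assoc. apply Rmult_le_compat_l. nra. auto. }
      nra. }
    rewrite (nrm_ext k _ E). auto. intros. unfold E. rewrite Rabs_minus_sym. auto. }
  assert (HBpart : forall j, (j < q)%nat ->
    nrm k (fun a b => gB d V C j a b - gB d V C' j a b) <= dl * rsum d (fun l => Rabs (V l j))).
  { intros j Hj. rewrite (nrm_ext k _ (fun a b => rsum d (fun l => V l j * (C l a b - C' l a b)))).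
    2:{ intros. unfold gB. rewrite <- rsum_minus. f_equal. apply rsum_ext. intros. ring. }
    eapply Rle_trans. apply nrm_comb. rewrite <- rsum_scal_l. apply rsum_le. intros l Hl.
    pose proof (HCl l Hl). pose proof (Rabs_pos (V l j)). nra. }
  assert (Htot : dSF p q k (gmap k d U V C) (gmap k d U V C') <= K * dl).
  { change (dSF p q k (gmap k d U V C) (gmap k d U V C')) with
      (rsum p (fun i => nrm k (fun a b => gA k d U C i a b - gA k d U C' i a b)) +
       rsum q (fun j => nrm k (fun a b => gB d V C j a b - gB d V C' j a b))).
    unfold K. 
    assert (rsum p (fun i => nrm k (fun a b => gA k d U C i a b - gA k d U C' i a b)) <= 2 * kap * dl * NX).
    { unfold NX. rewrite <- rsum_scal_l. apply rsum_le. intros. apply HApart; auto. }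
    assert (rsum q (fun j => nrm k (fun a b => gB d V C j a b - gB d V C' j a b)) <= dl * KV).
    { unfold KV. rewrite <- rsum_scal_l. apply rsum_le. intros. apply HBpart; auto. }
    nra. }
  assert (K * dl <= (K + 1) * dl) by nra.
  assert ((K + 1) * dl < (K + 1) * (eps / (K + 1))) by (apply Rmult_lt_compat_l; lra).
  replace ((K + 1) * (eps / (K + 1))) with eps in H0 by (field; lra). lra.
Qed.
Theorem proposition7p3 (p q k : nat) (M : mat)
  (Hnonneg : forall i j, (i < p)%nat -> (j < q)%nat -> 0 <= M i j)
  (Hrank : mat_rank_eq p q M (tri k))
  (Hpsd : psd_rank_eq p q M k)
  (U V : mat)
  (HUV : forall i j, (i < p)%nat -> (j < q)%nat ->
           M i j = rsum (tri k) (fun l => U i l * V l j)) :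
  homeomorphic (SF p q k M) (dSF p q k) (DeltaPQ p q k (tri k) U V) (dLin k (tri k)).
Proof.
  destruct Hrank as [[c [Hc Hli]] _].
  set (G := fun m l => epsilon (inhabits (fun _ : nat => 0))
    (fun gam : nat -> R => forall n, (n < tri k)%nat -> rsum (tri k) (fun m => gam m * V n (c m)) = del n l) m).
  assert (HG : forall n l, (n < tri k)%nat -> rsum (tri k) (fun m => G m l * V n (c m)) = del n l).
  { intros n l Hn. unfold G.
    apply (epsilon_spec (inhabits (fun _ : nat => 0))
      (fun gam : nat -> R => forall n, (n < tri k)%nat -> rsum (tri k) (fun m => gam m * V n (c m)) = del n l)).
    apply (vc_inv p q k M c U V Hc Hli HUV). auto. }
  exists (fmap (tri k) G c), (gmap k (tri k) U V).
  split; [|split; [|split; [|split; [|split]]]].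
  - intros x Hx. apply (f_Delta p q k M c G U V x Hc Hli HUV HG Hx).
  - intros y Hy. apply (g_SF p q k M U V y HUV Hy).
  - intros x Hx. apply (gf p q k M c G U V x Hc Hli HUV HG Hx).
  - intros y Hy. apply fg; auto.
  - apply f_cont; auto.
  - apply (g_cont p q k M c U V Hc Hli HUV).
Qed.
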